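(* For every nonempty finite $W\subseteq\mathbb{N}$ with $l(W)=l$, $$\left(\frac{2l}{2l-1}\right)^{h(W)-1}\le |W|.$$
   Context: $\mathbb{N}=\{0,1,2,\ldots\}$. For a set $W$ of integers, $l(W)$ is the maximum number of consecutive integers contained in $W$. For a finite $L\subseteq\mathbb{N}$ and an integer $r$, write $L+r:=\{x+r: x\in L,\ x+r\ge 0\}$. Define $h$ on finite subsets of $\mathbb{N}$ recursively on $|L|$: $h(\emptyset)=0$, and for $L\neq\emptyset$, $$h(L)=1+\max\Big\{h(L\cap(L+1)),\ \max_{M\in T(L)}\min\{h(L\cap M),\,h(L\cap(M-1))\}\Big\},$$ where $T(L)$ is the set of all finite $M\subseteq\mathbb{N}$ with $M\notin\{L,L+1\}$ and $0<|M|\le|L|$. *)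

(* Defs.v *)
(* Finite subsets of N are represented by (seq nat), read as
   the set of their elements (duplicates and order irrelevant). *)
From HB Require Import structures.
From mathcomp Require Import all_boot all_order all_algebra.
Set Implicit Arguments. Unset Strict Implicit. Unset Printing Implicit Defensive.

Definition card_s (L : seq nat) : nat := size (undup L).

Definition inter_s (L M : seq nat) : seq nat := [seq x <- L | x \in M].

Definition shift_up (L : seq nat) : seq nat := [seq x.+1 | x <- L].

Definition shift_down (M : seq nat) : seq nat := [seq x.-1 | x <- M & 0 < x].

Definition run_s (W : seq nat) (a k : nat) : bool :=
  all (fun i => a + i \in W) (iota 0 k).

(* l(W): maximal number of consecutive integers contained in W
   (a run of length k starts at some a ∈ W and has k <= |W| <= size W). *)
Definition lrun (W : seq nat) : nat :=
  \max_(a <- W) \max_(k < (size W).+1 | run_s W a k) k.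

Definition inT (L M : seq nat) : Prop :=
  ~ (M =i L) /\ ~ (M =i shift_up L) /\ 0 < card_s M /\ card_s M <= card_s L.

(* h_is h : h is the function h of the paper, i.e. it is a function of the
   underlying set and satisfies the defining recursion
     h(∅) = 0,
     h(L) = 1 + max{ h(L ∩ (L+1)), max_{M ∈ T(L)} min{h(L∩M), h(L∩(M-1))} }.
   The (possibly infinite-indexed) max is written out as: upper bound of all
   candidates, attained by one candidate. *)
Definition h_is (h : seq nat -> nat) : Prop :=
  (forall L L' : seq nat, L =i L' -> h L = h L') /\
  h [::] = 0 /\
  (forall L : seq nat, L != [::] ->
     let a := h (inter_s L (shift_up L)) in
     let f := fun M => minn (h (inter_s L M)) (h (inter_s L (shift_down M))) in
     [/\ a.+1 <= h L,
         (forall M, inT L M -> (f M).+1 <= h L) &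
         (h L = a.+1 \/ exists2 M, inT L M & h L = (f M).+1)]).

(* Main.v *)
Require Import Defs.
From HB Require Import structures.
From mathcomp Require Import all_boot all_order all_algebra.
From mathcomp Require Import zify.
Import Order.TTheory GRing.Theory Num.Theory.

Lemma run_sP W a k : run_s W a k <-> (forall i, i < k -> a + i \in W).
Proof.
rewrite /run_s; split.
- by move/allP=> H i Hi; apply: H; rewrite mem_iota.
- by move=> H; apply/allP=> i; rewrite mem_iota add0n => /H.
Qed.

Lemma mem_shift_up L x : (x \in shift_up L) = (0 < x) && (x.-1 \in L).
Proof.
apply/mapP/andP.
- by case=> y Hy ->.
- by case: x => [[]//|x [_ Hx]]; exists x.
Qed.

Lemma mem_shift_down M x : (x \in shift_down M) = (x.+1 \in M).
Proof.
apply/mapP/idP.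
- by case=> y; rewrite mem_filter => /andP[Hy Hm] ->; rewrite prednK.
- by move=> H; exists x.+1; rewrite // mem_filter H.
Qed.

Lemma card_inter L M : card_s (inter_s L M) = count (mem M) (undup L).
Proof. by rewrite /card_s /inter_s -filter_undup size_filter. Qed.

Lemma run_le_lrun W a k : run_s W a k -> k <= lrun W.
Proof.
case: k => // k /run_sP H.
have aW : a \in W by rewrite -(addn0 a); apply: H.
have kS : k.+1 <= size W.
  apply: (leq_trans _ (size_undup W)).
  have -> : k.+1 = size [seq a + i | i <- iota 0 k.+1] by rewrite size_map size_iota.
  apply: uniq_leq_size.
    by rewrite map_inj_uniq ?iota_uniq //; apply: addnI.
  by move=> y /mapP[i]; rewrite mem_iota add0n => /H Hi ->; rewrite mem_undup.
rewrite /lrun; apply: (@bigmaxn_sup_seq _ _ a) => //.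
have Hk : k.+1 < (size W).+1 by [].
apply: (leq_trans _ (leq_bigmax_cond (Ordinal Hk) _)) => //.
by apply/run_sP.
Qed.

Lemma run_sub L S a k : {subset S <= L} -> run_s S a k -> run_s L a k.
Proof. by move=> sub /run_sP H; apply/run_sP => i /H /sub. Qed.

Lemma start_exists L l : (forall a k, run_s L a k -> k <= l) ->
  forall x, x \in L -> exists2 s, (s \in L) && (s \notin shift_up L) & s <= x < s + l.
Proof.
move=> Hl.
suff H : forall x, x \in L -> exists2 s, (s \in L) && (s \notin shift_up L) &
   (s <= x) && run_s L s (x - s).+1.
  move=> x /H [s Hs /andP[Hsx Hr]]; exists s => //; rewrite Hsx /=.
  by have := Hl _ _ Hr; lia.
elim=> [|x IH] Hx.
  by exists 0; rewrite ?Hx ?mem_shift_up //=; apply/run_sP => i; rewrite subn0 ltnS leqn0 => /eqP ->.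
case Hsu: (x.+1 \in shift_up L).
  move: Hsu; rewrite mem_shift_up /= => /IH [s Hs /andP[Hsx /run_sP Hr]].
  exists s => //; apply/andP; split; first by lia.
  apply/run_sP => i Hi.
  case: (ltnP i (x - s).+1) => [/Hr //|Hi2].
  by have -> : s + i = x.+1 by lia.
exists x.+1; first by rewrite Hx Hsu.
by rewrite leqnn /=; apply/run_sP => i; rewrite subnn ltnS leqn0 => /eqP ->; rewrite addn0.
Qed.

Lemma size_flatten_const (s : seq nat) l :
  size (flatten [seq iota x l | x <- s]) = l * size s.
Proof. by elim: s => [|x s IH] /=; rewrite ?muln0 // size_cat size_iota IH mulnS. Qed.

Lemma n_le_lr L l : (forall a k, run_s L a k -> k <= l) ->
  card_s L <= l * count (predC (mem (shift_up L))) (undup L).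
Proof.
move=> Hl; rewrite -size_filter -size_flatten_const /card_s.
apply: uniq_leq_size; first exact: undup_uniq.
move=> x; rewrite mem_undup => /(@start_exists L l Hl) [s Hs Hsx].
apply/flattenP; exists (iota s l).
  by apply/mapP; exists s => //; rewrite mem_filter mem_undup /=; case/andP: Hs => -> ->.
by rewrite mem_iota; lia.
Qed.

Lemma card_split L : count (mem (shift_up L)) (undup L) +
  count (predC (mem (shift_up L))) (undup L) = card_s L.
Proof. by rewrite count_predC. Qed.

Lemma union_bound L M : card_s M <= card_s L ->
  count (mem M) (undup L) + count (mem (shift_down M)) (undup L) <=
  card_s L + count (mem (shift_up L)) (undup L).
Proof.
move=> HM.
set U := undup L.
have UU : uniq U by exact: undup_uniq.
set s1 := [seq x <- U | x \in M].
set s2 := [seq x.+1 | x <- [seq x <- U | x \in shift_down M]].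
have u1 : uniq s1 by exact: filter_uniq.
have u2 : uniq s2 by rewrite map_inj_uniq ?filter_uniq //; apply: succn_inj.
have E1 : count (mem M) U = size s1 by rewrite size_filter.
have E2 : count (mem (shift_down M)) U = size s2 by rewrite size_map size_filter.
rewrite E1 E2.
have Hc : size s1 + size s2 = size (undup (s1 ++ s2)) + count (mem s2) s1.
  rewrite undup_cat (undup_id u1) (undup_id u2) size_cat size_filter.
  rewrite -(count_predC (mem s2) s1); set a := count (mem s2) s1; set b := count (predC (mem s2)) s1; change (count (fun x => x \notin s2) s1) with b; by rewrite [a + b]addnC -addnA [a + _]addnC addnA.
rewrite Hc; apply: leq_add.
  apply: (leq_trans _ HM); rewrite /card_s; apply: uniq_leq_size; first exact: undup_uniq.
  move=> x; rewrite !mem_undup mem_cat => /orP[].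
    by rewrite mem_filter => /andP[].
  by case/mapP=> y; rewrite mem_filter mem_shift_down => /andP[H _] ->.
rewrite -!size_filter; apply: uniq_leq_size; first exact: filter_uniq.
move=> x; rewrite !mem_filter => /andP[Hs2 /andP[_ HU]]; rewrite HU andbT.
case/mapP: Hs2 => y; rewrite mem_filter => /andP[_ Hy] ->.
by rewrite /= mem_shift_up /= -(mem_undup L).
Qed.

Lemma arith1 n p r l : 1 <= l -> p + r = n -> n <= l * r -> p * (2 * l) <= n * (2 * l - 1).
Proof. move=> *; nia. Qed.

Lemma arith2 n p r l a b : 1 <= l -> p + r = n -> n <= l * r -> a + b <= n + p ->
  minn a b * (2 * l) <= n * (2 * l - 1).
Proof. move=> *; nia. Qed.

Lemma step h (Hh : h_is h) L l : L != [::] -> 1 <= l ->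
  (forall a k, run_s L a k -> k <= l) ->
  exists S, [/\ {subset S <= L}, h L <= (h S).+1 &
             card_s S * (2 * l) <= card_s L * (2 * l - 1)].
Proof.
move=> HL l1 Hl.
case: Hh => _ [_ Hrec].
have Hn := @n_le_lr L l Hl.
have Hs := card_split L.
case: (Hrec L HL) => _ _ [->|[M HM ->]].
  exists (inter_s L (shift_up L)); split => //.
  - by move=> x; rewrite mem_filter => /andP[].
  - by rewrite card_inter; apply: (@arith1 _ _ _ _ l1 Hs Hn).
case: HM => _ [_ [_ HMc]].
have Hu := @union_bound L M HMc.
have Ha := @arith2 _ _ _ _ _ _ l1 Hs Hn Hu.
case: (leqP (count (mem M) (undup L)) (count (mem (shift_down M)) (undup L))) => Hab.
  exists (inter_s L M); split.
  - by move=> x; rewrite mem_filter => /andP[].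
  - by rewrite ltnS geq_minl.
  - by rewrite card_inter; move: Ha; rewrite (minn_idPl Hab).
exists (inter_s L (shift_down M)); split.
- by move=> x; rewrite mem_filter => /andP[].
- by rewrite ltnS geq_minr.
- by rewrite card_inter; move: Ha; rewrite (minn_idPr (ltnW Hab)).
Qed.

Lemma card_pos L : L != [::] -> 0 < card_s L.
Proof.
case: L => // x s _; rewrite /card_s lt0n size_eq0; apply/eqP => H.
have : x \in undup (x :: s) by rewrite mem_undup mem_head.
by rewrite H.
Qed.

Local Open Scope ring_scope.

Definition cc (l : nat) : rat := (2 * l)%:R / (2 * l - 1)%:R.

Lemma cc_ge1 l : (1 <= l)%N -> 1 <= cc l.
Proof.
move=> l1; rewrite /cc ler_pdivlMr ?ltr0n; last by lia.
by rewrite mul1r ler_nat; lia.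
Qed.

Lemma cc_mul l s n : (1 <= l)%N -> (s * (2 * l) <= n * (2 * l - 1))%N ->
  cc l * s%:R <= n%:R.
Proof.
move=> l1 H; rewrite /cc mulrAC ler_pdivrMr ?ltr0n; last by lia.
by rewrite -!natrM ler_nat mulnC.
Qed.

Lemma key h (Hh : h_is h) n : forall L l, (card_s L <= n)%N -> L != [::] -> (1 <= l)%N ->
  (forall a k, run_s L a k -> k <= l)%N ->
  cc l ^+ (h L - 1) <= (card_s L)%:R.
Proof.
have [_ [H0 Hrec]] := Hh.
elim: n => [|n IH] L l Hc HL l1 Hl.
  by have := @card_pos L HL; lia.
have [S [Hsub HhS HcS]] := @step h Hh L l HL l1 Hl.
have cL := @card_pos L HL.
case: (eqVneq S [::]) => HS.
  move: HhS; rewrite HS H0 => HhL.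
  have -> : (h L - 1 = 0)%N by lia.
  by rewrite expr0 ler1n.
have HcS' : (card_s S <= n)%N by nia.
have HSl : (forall a k, run_s S a k -> k <= l)%N.
  by move=> a k /(@run_sub L S a k Hsub) /Hl.
have IHS := IH S l HcS' HS l1 HSl.
have hS1 : (1 <= h S)%N by have [H _ _] := Hrec S HS; lia.
apply: (le_trans (y := cc l ^+ h S)).
  by apply: ler_weXn2l; [exact: cc_ge1 | lia].
rewrite -(subnK hS1) addn1 exprS.
apply: (le_trans (y := cc l * (card_s S)%:R)); last exact: cc_mul.
by rewrite ler_pM2l // (lt_le_trans ltr01 (@cc_ge1 l l1)).
Qed.

Theorem mainTheorem6 (h : seq nat -> nat) (Hh : h_is h) (W : seq nat) :
  W != [::] ->
  (((2 * lrun W)%:R / (2 * lrun W - 1)%:R) ^+ (h W - 1) <= (card_s W)%:R :> rat)%R.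
Proof.
move=> HW.
have l1 : (1 <= lrun W)%N.
  case: W HW => // x s _; apply: (@run_le_lrun _ x).
  by apply/run_sP => i; rewrite ltnS leqn0 => /eqP ->; rewrite addn0 mem_head.
exact: (@key h Hh _ W _ (leqnn _) HW l1 (@run_le_lrun W)).
Qed.
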